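(* Let $\mathcal{A}$ and $\mathcal{B}$ be unital algebras over a field of characteristic zero, let $\mathcal{M}$ be an $(\mathcal{A},\mathcal{B})$-bimodule which is faithful as a left $\mathcal{A}$-module and as a right $\mathcal{B}$-module, and let $\mathcal{T}=Tri(\mathcal{A},\mathcal{M},\mathcal{B})$ be the associated (unital) triangular algebra, with identity $\mathbf{1}$ and center $Z(\mathcal{T})$. Let $n>1$ be an integer and let $\Psi:\mathcal{T}\to\mathcal{T}$ be a linear mapping satisfying \[ 2\Psi(X^n)=X^{n-1}\Psi(X)+\Psi(X)X^{n-1}\quad\text{for all } X\in\mathcal{T}. \] If $\Psi(\mathbf{1})\in Z(\mathcal{T})$, then $\Psi$ is a two-sided centralizer.
   Context: The triangular algebra $Tri(\mathcal{A},\mathcal{M},\mathcal{B})$ is the set of matrices $\begin{bmatrix} a & m\\ 0 & b\end{bmatrix}$ with $a\in\mathcal{A}$, $m\in\mathcal{M}$, $b\in\mathcal{B}$, under the usual matrix operations. Its center is $Z(\mathcal{T})=\{a\oplus b: a\in Z(\mathcal{A}),\ b\in Z(\mathcal{B}),\ am=mb \text{ for all } m\in\mathcal{M}\}$. An additive map $T:\mathcal{T}\to\mathcal{T}$ is a two-sided centralizer if $T(XY)=T(X)Y=XT(Y)$ for all $X,Y\in\mathcal{T}$. *)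

(* Defs.v *)
From HB Require Import structures.
From mathcomp Require Import all_boot all_order all_algebra.
Set Implicit Arguments. Unset Strict Implicit. Unset Printing Implicit Defensive.
Import GRing.Theory.
Local Open Scope ring_scope.

(* Triangular algebra Tri(A, M, B): elements are triples (a, m, b), i.e.
   the matrix [[a, m], [0, b]].  The carrier is the product F-module
   A * M * B (MathComp's canonical product lmodType). *)

Section Tri.
Variables (F : fieldType) (A B : algType F) (M : lmodType F).
Variable la : A -> M -> M.
Variable ra : M -> B -> M.

Definition bimodule : Prop :=
  (forall a m1 m2, la a (m1 + m2) = la a m1 + la a m2) /\
      (forall a1 a2 m, la (a1 + a2) m = la a1 m + la a2 m) /\
      (forall a1 a2 m, la (a1 * a2) m = la a1 (la a2 m)) /\
      (forall m, la 1 m = m) /\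
      (forall (k : F) a m, la (k *: a) m = k *: la a m /\ la a (k *: m) = k *: la a m) /\
      (forall b m1 m2, ra (m1 + m2) b = ra m1 b + ra m2 b) /\
      (forall b1 b2 m, ra m (b1 + b2) = ra m b1 + ra m b2) /\
      (forall b1 b2 m, ra m (b1 * b2) = ra (ra m b1) b2) /\
      (forall m, ra m 1 = m) /\
      (forall (k : F) b m, ra m (k *: b) = k *: ra m b /\ ra (k *: m) b = k *: ra m b) /\
      (forall a m b, la a (ra m b) = ra (la a m) b).

Definition faithful_left : Prop := forall a, (forall m, la a m = 0) -> a = 0.
Definition faithful_right : Prop := forall b, (forall m, ra m b = 0) -> b = 0.

Definition tri := (A * M * B)%type.

Definition tri_mul (X Y : tri) : tri :=
  let: (a, m, b) := X in let: (a', m', b') := Y in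
  (a * a', la a m' + ra m b', b * b').

Definition tri_one : tri := (1, 0, 1).

Definition tri_exp (X : tri) (n : nat) : tri := iter n (tri_mul X) tri_one.

Definition tri_center (Z : tri) : Prop :=
  exists a b, [/\ Z = (a, 0, b),
    (forall x : A, a * x = x * a),
    (forall y : B, b * y = y * b)
  & (forall m, la a m = ra m b)].

(* two-sided centralizer (additivity is part of the linear type) *)
Definition two_sided_centralizer (T : tri -> tri) : Prop :=
  forall X Y, T (tri_mul X Y) = tri_mul (T X) Y /\ tri_mul (T X) Y = tri_mul X (T Y).
End Tri.

(* Main.v *)
Require Import Defs.
From HB Require Import structures.
From mathcomp Require Import all_boot all_order all_algebra.
Import GRing.Theory.
Local Open Scope ring_scope.

Lemma pairD (F : fieldType) (U V : lmodType F) (x1 x2 : U) (y1 y2 : V) :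
  (x1, y1) + (x2, y2) = (x1 + x2, y1 + y2).
Proof. by []. Qed.
Lemma pairZ (F : fieldType) (U V : lmodType F) k (x1 : U) (y1 : V) :
  k *: (x1, y1) = (k *: x1, k *: y1).
Proof. by []. Qed.

Lemma vanish (F : fieldType) (V : lmodType F) (N : nat) (e : nat -> V) :
  [pchar F] =i pred0 -> (forall t : F, \sum_(j < N) t ^+ j *: e j = 0) ->
  forall k : 'I_N, e k = 0.
Proof.
move=> ch H k.
pose a : 'rV[F]_N := \row_(j < N) (j%:R : F).
pose Vm := Vandermonde N a.
have unitV : Vm \in unitmx.
  rewrite unitmxE det_Vandermonde unitfE; apply/prodf_neq0 => i _.
  apply/prodf_neq0 => j ij; rewrite !mxE.
  move/pcharf0P: ch => ch.
  by rewrite -natrB ?(ltnW ij) // ch subn_eq0 -ltnNge ij.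
have -> : e k = \sum_(l < N) (1%:M : 'M[F]_N) l k *: e l.
  rewrite (bigD1 k) //= mxE eqxx scale1r big1 ?addr0 // => l /negbTE lk.
  by rewrite mxE lk mulr0n scale0r.
rewrite -(mulmxV unitV).
under eq_bigr => l _ do rewrite mxE. under eq_bigr => l _ do rewrite scaler_suml.
rewrite exchange_big /=; apply: big1 => j _.
transitivity (invmx Vm j k *: \sum_(l < N) Vm l j *: e l).
  by rewrite scaler_sumr; apply: eq_bigr => l _; rewrite scalerA mulrC.
rewrite -[RHS](scaler0 _ (invmx Vm j k)); congr (_ *: _).
rewrite -[RHS](H (j%:R)); apply: eq_bigr => l _; by rewrite !mxE.
Qed.

Theorem corollary2p5 (F : fieldType) (A B : algType F) (M : lmodType F)
  (la : A -> M -> M) (ra : M -> B -> M) (n : nat)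
  (Psi : {linear tri A B M -> tri A B M}) :
  [pchar F] =i pred0 ->
  bimodule la ra -> faithful_left la -> faithful_right ra ->
  (1 < n)%N ->
  (forall X : tri A B M,
     Psi (tri_exp la ra X n) *+ 2 =
     tri_mul la ra (tri_exp la ra X n.-1) (Psi X) +
     tri_mul la ra (Psi X) (tri_exp la ra X n.-1)) ->
  tri_center la ra (Psi (tri_one A B M)) ->
  two_sided_centralizer la ra Psi.
Proof.
move=> ch hbi fl fr n1 H hZ.
have [laD [laDl [laM [la1 [laZ [raD [raDr [raM [ra1 [raZ lara]]]]]]]]]] := hbi.
have la0 a : la a 0 = 0.
  by apply/(addrI (la a 0)); rewrite -laD !addr0.
have l0a m : la 0 m = 0.
  by apply/(addrI (la 0 m)); rewrite -laDl !addr0.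
have ra0 m : ra m 0 = 0.
  by apply/(addrI (ra m 0)); rewrite -raDr !addr0.
have r0b b : ra 0 b = 0.
  by apply/(addrI (ra 0 b)); rewrite -raD !addr0.
set mul := tri_mul la ra.
set one := tri_one A B M.
set exp := tri_exp la ra.
have pairD (x1 y1 : A) (x2 y2 : M) (x3 y3 : B) :
  ((x1, x2, x3) : tri A B M) + (y1, y2, y3) = (x1 + y1, x2 + y2, x3 + y3) by [].
have pairZ k (x1 : A) (x2 : M) (x3 : B) :
  k *: ((x1, x2, x3) : tri A B M) = (k *: x1, k *: x2, k *: x3) by [].
have tmulDl (X Y W : tri A B M) : mul (X + Y) W = mul X W + mul Y W.
  case: X => [[x1 x2] x3]; case: Y => [[y1 y2] y3]; case: W => [[w1 w2] w3].
  rewrite /mul (pairD x1 y1) /= !pairD; congr (_, _, _); rewrite ?mulrDl //.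
  by rewrite laDl raD addrACA.
have tmulDr (X Y W : tri A B M) : mul W (X + Y) = mul W X + mul W Y.
  case: X => [[x1 x2] x3]; case: Y => [[y1 y2] y3]; case: W => [[w1 w2] w3].
  rewrite /mul (pairD x1 y1) /= !pairD; congr (_, _, _); rewrite ?mulrDr //.
  by rewrite laD raDr addrACA.
have tmulZl k (X W : tri A B M) : mul (k *: X) W = k *: mul X W.
  case: X => [[x1 x2] x3]; case: W => [[w1 w2] w3].
  rewrite /mul (pairZ k x1) /= !pairZ; congr (_, _, _); rewrite ?scalerAl //.
  by rewrite (laZ k x1 w2).1 (raZ k w3 x2).2 scalerDr.
have tmulZr k (X W : tri A B M) : mul W (k *: X) = k *: mul W X.
  case: X => [[x1 x2] x3]; case: W => [[w1 w2] w3].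
  rewrite /mul (pairZ k x1) /= !pairZ; congr (_, _, _); rewrite ?scalerAr //.
  by rewrite (laZ k w1 x2).2 (raZ k x3 w2).1 scalerDr.
have tmul0l (W : tri A B M) : mul 0 W = 0.
  by apply/(addrI (mul 0 W)); rewrite -tmulDl !addr0.
have tmul0r (W : tri A B M) : mul W 0 = 0.
  by apply/(addrI (mul W 0)); rewrite -tmulDr !addr0.
have tmul1l (W : tri A B M) : mul one W = W.
  case: W => [[w1 w2] w3]; by rewrite /mul /one /= !mul1r la1 r0b addr0.
have tmul1r (W : tri A B M) : mul W one = W.
  case: W => [[w1 w2] w3]; by rewrite /mul /one /= !mulr1 ra1 la0 add0r.
have tmulsumr (W : tri A B M) (G : nat -> tri A B M) k :
    mul W (\sum_(0 <= j < k) G j) = \sum_(0 <= j < k) mul W (G j).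
  exact: (big_morph _ (fun x y => tmulDr x y W) (tmul0r W)).
have tmulsuml (W : tri A B M) (G : nat -> tri A B M) k :
    mul (\sum_(0 <= j < k) G j) W = \sum_(0 <= j < k) mul (G j) W.
  exact: (big_morph _ (fun x y => tmulDl x y W) (tmul0l W)).
have expS (Y : tri A B M) j : exp Y j.+1 = mul Y (exp Y j) by [].
have expE (Y : tri A B M) (t : F) k : (k < n.+1)%N ->
  exp (one + t *: Y) k = \sum_(0 <= j < n.+1) (t ^+ j * 'C(k, j)%:R) *: exp Y j.
  elim: k => [_ | k IH lt].
    rewrite big_nat_recl // expr0 mul1r bin0 scale1r big1 ?addr0 // => j _.
    by rewrite bin0n /= mulr0 scale0r.
  rewrite expS IH ?(ltnW lt) // tmulDl tmul1l tmulZl tmulsumr.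
  under [X in t *: X]eq_bigr => j _ do rewrite tmulZr -expS.
  rewrite [X in X + _ = _](big_nat_recl n) // [X in _ + t *: X = _](big_nat_recr n) //.
  rewrite [RHS](big_nat_recl n) //.
  rewrite (@bin_small k n lt) mulr0 scale0r /= addr0 !bin0.
  under [in RHS]eq_bigr => j _ do rewrite binS natrD mulrDr scalerDl.
  rewrite big_split /= scaler_sumr -!addrA; congr (_ + (_ + _)).
  by apply: eq_bigr => j _; rewrite scalerA exprS mulrA.
have [za [zb [Zeq zaC zbC zm]]] := hZ.
have ZC (X : tri A B M) : mul (Psi one) X = mul X (Psi one).
  rewrite Zeq; case: X => [[x1 x2] x3]; rewrite /mul /=; congr (_, _, _) => //.
  by rewrite r0b la0 addr0 add0r zm.
have Zass1 (X Y : tri A B M) : mul (Psi one) (mul X Y) = mul (mul (Psi one) X) Y.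
  rewrite Zeq; case: X => [[x1 x2] x3]; case: Y => [[y1 y2] y3].
  rewrite /mul /=; congr (_, _, _); rewrite ?mulrA //.
  by rewrite !r0b !addr0 laD laM lara.
have Zass2 (X Y : tri A B M) : mul (mul (Psi one) X) Y = mul X (mul (Psi one) Y).
  rewrite Zeq; case: X => [[x1 x2] x3]; case: Y => [[y1 y2] y3].
  rewrite /mul /=; congr (_, _, _); rewrite ?mulrA ?zaC ?zbC //.
  by rewrite !r0b !addr0 laM -zbC raM -zm.
have [m nE] : exists m, n = m.+2 by by exists n.-2; case: n n1 {H expE} => [|[|k]].
have key (Y : tri A B M) : Psi Y = mul (Psi one) Y.
  pose Z := Psi one.
  have sum_recr (G : nat -> tri A B M) k :
    \sum_(0 <= i < k.+1) G i = \sum_(0 <= i < k) G i + G k by rewrite big_nat_recr.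
  have sum_recl (G : nat -> tri A B M) k :
    \sum_(0 <= i < k.+1) G i = G 0%N + \sum_(0 <= i < k) G i.+1 by rewrite big_nat_recl.
  have sumD (G G' : nat -> tri A B M) k :
    \sum_(0 <= i < k) (G i + G' i) = \sum_(0 <= i < k) G i + \sum_(0 <= i < k) G' i
    by rewrite big_split.
  have PZ k (W : tri A B M) : Psi (k *: W) = k *: Psi W by rewrite linearZ.
  pose c j := 'C(n, j)%:R *: (Psi (exp Y j) *+ 2)
     - 'C(n.-1, j)%:R *: (mul (exp Y j) Z + mul Z (exp Y j))
     - (if j is j'.+1 then 'C(n.-1, j')%:R *: (mul (exp Y j') (Psi Y) + mul (Psi Y) (exp Y j')) else 0).
  have hc t : \sum_(j < n.+1) t ^+ j *: c j = 0.
    rewrite -(big_mkord xpredT (fun j => t ^+ j *: c j)).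
    have HX := H (one + t *: Y).
    change (Psi (exp (one + t *: Y) n) *+ 2 = mul (exp (one + t *: Y) n.-1) (Psi (one + t *: Y)) + mul (Psi (one + t *: Y)) (exp (one + t *: Y) n.-1)) in HX; move: HX.
    rewrite (expE Y t n) // (expE Y t n.-1) ?(leq_ltn_trans (leq_pred n) (ltnSn n)) //.
    have PsiX : Psi (one + t *: Y) = Z + t *: Psi Y by rewrite linearD linearZ.
    rewrite PsiX.
    move/eqP; rewrite -subr_eq0 => /eqP HX0; rewrite -[RHS]HX0.
    have L1 : \sum_(0 <= i < n.+1) t ^+ i *: ('C(n, i)%:R *: (Psi (exp Y i) *+ 2))
        = Psi (\sum_(0 <= j < n.+1) (t ^+ j * 'C(n, j)%:R) *: exp Y j) *+ 2.
      rewrite linear_sum -sumrMnl; apply: eq_bigr => j _.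
      by rewrite PZ scalerA scalerMnr.
    have L2 : \sum_(0 <= i < n.+1) t ^+ i *: ('C(n.-1, i)%:R *: (mul (exp Y i) Z + mul Z (exp Y i)))
        = \sum_(0 <= j < n.+1) mul ((t ^+ j * 'C(n.-1, j)%:R) *: exp Y j) Z
          + \sum_(0 <= j < n.+1) mul Z ((t ^+ j * 'C(n.-1, j)%:R) *: exp Y j).
      rewrite -sumD; apply: eq_bigr => j _.
      by rewrite tmulZl tmulZr scalerA scalerDr.
    have L3 : \sum_(0 <= i < n.+1) t ^+ i *: (if i is j'.+1 then 'C(n.-1, j')%:R *: (mul (exp Y j') (Psi Y) + mul (Psi Y) (exp Y j')) else 0)
        = t *: \sum_(0 <= j < n.+1) mul ((t ^+ j * 'C(n.-1, j)%:R) *: exp Y j) (Psi Y)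
          + t *: \sum_(0 <= j < n.+1) mul (Psi Y) ((t ^+ j * 'C(n.-1, j)%:R) *: exp Y j).
      rewrite -scalerDr -sumD [LHS]sum_recl [X in t *: X]sum_recr scaler0 add0r.
      rewrite (@bin_small n.-1 n); last by rewrite nE.
      rewrite mulr0 scale0r tmul0l tmul0r !addr0 scaler_sumr.
      apply: eq_bigr => j _.
      by rewrite tmulZl tmulZr -scalerDr !scalerA exprS mulrA.
    rewrite /c; under eq_bigr => i _ do rewrite !scalerBr.
    rewrite !sumrB L1 L2 L3.
    rewrite tmulDr tmulDl tmulZr tmulZl !tmulsuml !tmulsumr.
    rewrite -addrA -opprD; congr (_ - _).
    by rewrite addrACA.
  have c1 := @vanish _ _ _ _ ch hc (Ordinal (leqW n1)).
  have E : c 1%N = 'C(n, 1)%:R *: (Psi (mul Y one) *+ 2)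
     - 'C(n.-1, 1)%:R *: (mul (mul Y one) Z + mul Z (mul Y one))
     - 'C(n.-1, 0)%:R *: (mul one (Psi Y) + mul (Psi Y) one) by [].
  move: c1; rewrite /= E nE bin1 bin0 !tmul1r tmul1l succnK bin1.
  rewrite -ZC scale1r !scaler_nat => c1.
  apply/eqP; rewrite -subr_eq0.
  have : (Psi Y - mul Z Y) *+ (m.+1 * 2) = 0.
    rewrite -[RHS]c1 mulrnBl -!mulr2n -!mulrnA [(2 * m.+2)%N]mulnC [(2 * m.+1)%N]mulnC (mulSn m.+1 2) mulrnDr.
    by rewrite [RHS]addrAC [Psi Y *+ 2 + _]addrC addrK.
  rewrite -scaler_nat => /eqP; rewrite scaler_eq0 => /orP [|//].
  by move/pcharf0P: ch => ->.
move=> X Y; rewrite (key (mul X Y)) (key X) (key Y); split.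
  exact: Zass1.
exact: Zass2.
Qed.
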